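(* Let $\lambda$ be a regular cardinal, $(P,\le)$ a poset, $i\in\{1,2,3\}$, and let $f:\lambda\to P$ be a $\lambda$-sequence that converges to $x\in P$ with respect to the topology $\tau^\lambda_{O_i}(P)$. Then there exists an isotone and cofinal function $\hat h:\lambda\to\lambda$ such that the $\lambda$-sequence $f\circ\hat h$ O$_i$-converges to $x$.
   Context: A $\lambda$-sequence in $P$ is a function $f:\lambda\to P$, regarded as a net indexed by the well-ordered (directed) set $\lambda$. A function $h:\lambda\to\lambda$ is cofinal if its range is cofinal (unbounded) in $\lambda$, and isotone if $\alpha\le\beta$ implies $h(\alpha)\le h(\beta)$. For monotone nets, $y_\gamma\uparrow y$ means increasing with supremum $y$, $z_\gamma\downarrow y$ decreasing with infimum $y$; $[a,b]:=\{t:a\le t\le b\}$; directed/filtered sets are nonempty sets in which finite subsets have upper/lower bounds in the set. A net $(x_\gamma)_{\gamma\in\Gamma}$ O$_1$-converges to $x$ if there are nets $(y_\gamma)_{\gamma\in\Gamma}$, $(z_\gamma)_{\gamma\in\Gamma}$ with eventually $y_\gamma\le x_\gamma\le z_\gamma$, $y_\gamma\uparrow x$, $z_\gamma\downarrow x$; it O$_2$-converges to $x$ if there are directed $M$ and filtered $N$ with $\sup M=\inf N=x$ such that for every $(m,n)\in M\times N$ the net is eventually in $[m,n]$; it O$_3$-converges to $x$ if the same holds with $M,N$ arbitrary subsets with $\sup M=\inf N=x$. A subset $X\subseteq P$ is O$^\lambda_i$-closed if no $\lambda$-sequence in $X$ O$_i$-converges to a point outside $X$; these sets are the closed sets of a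 topology $\tau^\lambda_{O_i}(P)$. *)

(* Defs.v *)
From Stdlib Require Import Classical.

Definition is_poset {P : Type} (le : P -> P -> Prop) : Prop :=
  (forall x, le x x) /\
  (forall x y, le x y -> le y x -> x = y) /\
  (forall x y z, le x y -> le y z -> le x z).

Definition upper_bound {P : Type} (le : P -> P -> Prop) (M : P -> Prop) (u : P) :=
  forall m, M m -> le m u.
Definition lower_bound {P : Type} (le : P -> P -> Prop) (N : P -> Prop) (l : P) :=
  forall n, N n -> le l n.
Definition is_sup {P : Type} (le : P -> P -> Prop) (M : P -> Prop) (x : P) :=
  upper_bound le M x /\ (forall u, upper_bound le M u -> le x u).
Definition is_inf {P : Type} (le : P -> P -> Prop) (N : P -> Prop) (x : P) :=
  lower_bound le N x /\ (forall l, lower_bound le N l -> le l x).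

(* directed: nonempty, and every finite subset has an upper bound in the set
   (equivalently: nonempty and every pair has an upper bound in the set) *)
Definition directed {P : Type} (le : P -> P -> Prop) (M : P -> Prop) :=
  (exists m, M m) /\
  (forall a b, M a -> M b -> exists c, M c /\ le a c /\ le b c).
Definition filtered {P : Type} (le : P -> P -> Prop) (N : P -> Prop) :=
  (exists n, N n) /\
  (forall a b, N a -> N b -> exists c, N c /\ le c a /\ le c b).

Definition leq_of {L : Type} (lt : L -> L -> Prop) (a b : L) : Prop := lt a b \/ a = b.

Definition injective {A B : Type} (f : A -> B) := forall x y, f x = f y -> x = y.

(* (L, lt) is (the well-ordered set of ordinals below) an infinite regular
   cardinal lambda:
   - lt is a strict well-order;
   - L is nonempty without a greatest element (lambda is an infinite limit);
   - lambda is an initial ordinal: no proper initial segment is equipotent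
     with L (no injection of L into it);
   - lambda is regular: every cofinal subset of L has cardinality lambda
     (L injects into it), i.e. cf(lambda) = lambda. *)
Definition regular_cardinal (L : Type) (lt : L -> L -> Prop) : Prop :=
  well_founded lt /\
  (forall a, ~ lt a a) /\
  (forall a b c, lt a b -> lt b c -> lt a c) /\
  (forall a b, lt a b \/ a = b \/ lt b a) /\
  (exists a : L, True) /\
  (forall a, exists b, lt a b) /\
  (forall a, ~ exists g : L -> {b : L | lt b a}, injective g) /\
  (forall S : L -> Prop, (forall a, exists b, S b /\ leq_of lt a b) ->
     exists g : L -> {b : L | S b}, injective g).

Section Conv.
Context {L : Type} (lt : L -> L -> Prop) {P : Type} (le : P -> P -> Prop).

Definition eventually (Q : L -> Prop) : Prop :=
  exists a, forall b, leq_of lt a b -> Q b.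

Definition range (f : L -> P) : P -> Prop := fun p => exists a, f a = p.

Definition increasing (y : L -> P) := forall a b, leq_of lt a b -> le (y a) (y b).
Definition decreasing (z : L -> P) := forall a b, leq_of lt a b -> le (z b) (z a).

Definition O1_conv (f : L -> P) (x : P) : Prop :=
  exists y z : L -> P,
    eventually (fun g => le (y g) (f g) /\ le (f g) (z g)) /\
    increasing y /\ is_sup le (range y) x /\
    decreasing z /\ is_inf le (range z) x.

Definition O2_conv (f : L -> P) (x : P) : Prop :=
  exists M N : P -> Prop,
    directed le M /\ filtered le N /\ is_sup le M x /\ is_inf le N x /\
    forall m n, M m -> N n -> eventually (fun g => le m (f g) /\ le (f g) n).

Definition O3_conv (f : L -> P) (x : P) : Prop :=
  exists M N : P -> Prop,
    is_sup le M x /\ is_inf le N x /\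
    forall m n, M m -> N n -> eventually (fun g => le m (f g) /\ le (f g) n).
End Conv.

Inductive Oidx := O1 | O2 | O3.

Definition O_conv {L : Type} (lt : L -> L -> Prop) {P : Type} (le : P -> P -> Prop)
  (i : Oidx) (f : L -> P) (x : P) : Prop :=
  match i with
  | O1 => O1_conv lt le f x
  | O2 => O2_conv lt le f x
  | O3 => O3_conv lt le f x
  end.

Definition O_closed {L : Type} (lt : L -> L -> Prop) {P : Type} (le : P -> P -> Prop)
  (i : Oidx) (X : P -> Prop) : Prop :=
  forall (g : L -> P) (x : P), (forall a, X (g a)) -> O_conv lt le i g x -> X x.

Definition O_open {L : Type} (lt : L -> L -> Prop) {P : Type} (le : P -> P -> Prop)
  (i : Oidx) (U : P -> Prop) : Prop :=
  O_closed lt le i (fun p => ~ U p).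

Definition tau_conv {L : Type} (lt : L -> L -> Prop) {P : Type} (le : P -> P -> Prop)
  (i : Oidx) (f : L -> P) (x : P) : Prop :=
  forall U : P -> Prop, O_open lt le i U -> U x -> eventually lt (fun a => U (f a)).

Definition isotone {L : Type} (lt : L -> L -> Prop) (h : L -> L) :=
  forall a b, leq_of lt a b -> leq_of lt (h a) (h b).
Definition cofinal {L : Type} (lt : L -> L -> Prop) (h : L -> L) :=
  forall a, exists b, leq_of lt a (h b).

(* Main.v *)
Require Import Defs.
From Stdlib Require Import Classical ClassicalEpsilon FunctionalExtensionality ProofIrrelevance.

Lemma leq_refl {L} (lt : L -> L -> Prop) a : leq_of lt a a.
Proof. right; reflexivity. Qed.

Lemma leq_trans {L} (lt : L -> L -> Prop) :
  (forall a b c, lt a b -> lt b c -> lt a c) ->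
  forall a b c, leq_of lt a b -> leq_of lt b c -> leq_of lt a c.
Proof.
  intros T a b c [H1|H1] [H2|H2]; subst; unfold leq_of; eauto.
Qed.

Lemma leq_max {L} (lt : L -> L -> Prop) :
  (forall a b, lt a b \/ a = b \/ lt b a) ->
  forall a b, exists c, leq_of lt a c /\ leq_of lt b c.
Proof.
  intros T a b. destruct (T a b) as [H|[H|H]].
  - exists b; split; [left; auto | right; auto].
  - subst; exists b; split; right; auto.
  - exists a; split; [right; auto | left; auto].
Qed.

Lemma not_lt_leq {L} (lt : L -> L -> Prop) :
  (forall a b, lt a b \/ a = b \/ lt b a) ->
  forall a b, ~ lt a b -> leq_of lt b a.
Proof.
  intros T a b H. destruct (T a b) as [H1|[H1|H1]]; [tauto| subst; right; auto | left; auto].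
Qed.

Lemma ev_and {L} (lt : L -> L -> Prop) (Q R : L -> Prop) :
  (forall a b c, lt a b -> lt b c -> lt a c) ->
  (forall a b, lt a b \/ a = b \/ lt b a) ->
  eventually lt Q -> eventually lt R -> eventually lt (fun b => Q b /\ R b).
Proof.
  intros Tr To [a Ha] [b Hb]. destruct (leq_max lt To a b) as [c [H1 H2]].
  exists c. intros d Hd. split; [apply Ha|apply Hb]; eapply leq_trans; eauto.
Qed.

Lemma not_cofinal_ev {L} (lt : L -> L -> Prop) (Q : L -> Prop) :
  ~ (forall a, exists b, leq_of lt a b /\ Q b) -> eventually lt (fun b => ~ Q b).
Proof.
  intros H. apply not_all_ex_not in H. destruct H as [a Ha].
  exists a. intros b Hb HQ. apply Ha. eauto.
Qed.

Lemma bounded {L} (lt : L -> L -> Prop) : regular_cardinal L lt ->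
  forall (al : L) (d : {c | lt c al} -> L), exists B, forall c, leq_of lt (d c) B.
Proof.
  intros RC al d. destruct RC as (WF & Irr & Tr & To & [a0 _] & Unb & Init & Reg).
  apply NNPP; intros Hn.
  assert (HS : forall a, exists b, (exists c, d c = b) /\ leq_of lt a b).
  { intros a. apply NNPP; intros Hb. apply Hn. exists a. intros c.
    destruct (To (d c) a) as [H|[H|H]]; [left; auto| right; auto|].
    exfalso; apply Hb; exists (d c); split; [eauto| left; auto]. }
  destruct (Reg _ HS) as [G HG].
  apply (Init al).
  exists (fun b => proj1_sig (constructive_indefinite_description _ (proj2_sig (G b)))).
  intros x y Hxy.
  destruct (constructive_indefinite_description _ (proj2_sig (G x))) as [cx Hcx].
  destruct (constructive_indefinite_description _ (proj2_sig (G y))) as [cy Hcy].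
  simpl in Hxy. subst cy. apply HG.
  destruct (G x) as [gx px], (G y) as [gy py]. simpl in *. subst.
  f_equal. apply proof_irrelevance.
Qed.

Lemma pigeon {L} (lt : L -> L -> Prop) : regular_cardinal L lt ->
  forall (al : L) (R : L -> L -> Prop),
  (forall a, exists b, leq_of lt a b /\ exists c, lt c al /\ R b c) ->
  exists c, lt c al /\ forall a, exists b, leq_of lt a b /\ R b c.
Proof.
  intros RC al R H. pose proof RC as (WF & Irr & Tr & To & _).
  apply NNPP; intros Hn.
  assert (Hd : forall c : {c | lt c al}, exists a, forall b, leq_of lt a b -> ~ R b (proj1_sig c)).
  { intros [c Hc]. simpl. apply NNPP; intros H2. apply Hn. exists c. split; auto.
    intros a. apply NNPP; intros H3. apply H2. exists a. intros b Hb HR. apply H3. eauto. }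
  destruct (bounded lt RC al (fun c => proj1_sig (constructive_indefinite_description _ (Hd c)))) as [B HB].
  destruct (H B) as [b [Hb [c [Hc HR]]]].
  pose proof (HB (exist _ c Hc)) as HB1. simpl in HB1.
  pose proof (proj2_sig (constructive_indefinite_description _ (Hd (exist _ c Hc)))) as Hdc.
  simpl in Hdc.
  apply (Hdc b); auto. eapply (leq_trans lt Tr); eauto.
Qed.

Lemma extract {L} (lt : L -> L -> Prop) : regular_cardinal L lt ->
  forall A : L -> L, (forall al, eventually lt (fun b => leq_of lt al (A b))) ->
  exists k : L -> L, isotone lt k /\ cofinal lt k /\ isotone lt (fun g => A (k g))
     /\ cofinal lt (fun g => A (k g)).
Proof.
  intros RC A HA. pose proof RC as (WF & Irr & Tr & To & [a0 _] & Unb & Init & Reg).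
  set (body := fun (g : L) (rec : forall d, lt d g -> L) =>
    epsilon (inhabits g) (fun b => leq_of lt g b /\ forall d (H : lt d g),
       leq_of lt (rec d H) b /\ leq_of lt (A (rec d H)) (A b))).
  set (k := Fix WF (fun _ => L) body).
  assert (Hk : forall g, k g = body g (fun d _ => k d)).
  { intros g. unfold k. refine (Fix_eq WF (fun _ => L) body _ g). intros x f1 f2 Hf.
    assert (f1 = f2) as ->; [|reflexivity].
    apply functional_extensionality_dep; intros y. apply functional_extensionality_dep; intros p.
    apply Hf. }
  assert (Hspec : forall g, leq_of lt g (k g) /\ forall d, lt d g ->
       leq_of lt (k d) (k g) /\ leq_of lt (A (k d)) (A (k g))).
  { intros g. rewrite Hk. unfold body.
    match goal with |- context [epsilon ?i ?P] => assert (HE : exists b, P b) end.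
    { destruct (bounded lt RC g (fun d => k (proj1_sig d))) as [B1 HB1].
      destruct (bounded lt RC g (fun d => A (k (proj1_sig d)))) as [B2 HB2].
      destruct (HA B2) as [b0 Hb0].
      destruct (leq_max lt To g B1) as [c1 [Hc1 Hc1']].
      destruct (leq_max lt To c1 b0) as [c [Hc Hc']].
      exists c. split; [eapply (leq_trans lt Tr); eauto|].
      intros d Hd. split.
      - eapply (leq_trans lt Tr); [apply (HB1 (exist _ d Hd))|].
        eapply (leq_trans lt Tr); eauto.
      - eapply (leq_trans lt Tr); [apply (HB2 (exist _ d Hd))|]. apply Hb0. auto. }
    pose proof (epsilon_spec (inhabits g) _ HE) as HS. simpl in HS. exact HS. }
  exists k. split; [|split; [|split]].
  - intros a b [H|H]; [apply (Hspec b); auto| subst; right; auto].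
  - intros a. exists a. apply Hspec.
  - intros a b [H|H]; [apply (Hspec b); auto| subst; right; auto].
  - intros al. destruct (HA al) as [b0 Hb0]. exists b0. apply Hb0. apply Hspec.
Qed.

Definition istop {P} (le : P -> P -> Prop) p := forall q, le q p.
Definition isbot {P} (le : P -> P -> Prop) p := forall q, le p q.
Definition Dg {P} (le : P -> P -> Prop) (i : Oidx) (p : P) : Prop :=
  match i with O3 => istop le p \/ isbot le p | _ => False end.
Definition O3n {L} (lt : L -> L -> Prop) {P} (le : P -> P -> Prop) (f : L -> P) (x : P) :=
  exists M N : P -> Prop, (exists m, M m) /\ (exists n, N n) /\
    is_sup le M x /\ is_inf le N x /\
    forall m n, M m -> N n -> eventually lt (fun g => le m (f g) /\ le (f g) n).
Definition Cv {L} (lt : L -> L -> Prop) {P} (le : P -> P -> Prop) (i : Oidx) :=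
  match i with O3 => O3n lt le | _ => O_conv lt le i end.



Lemma C_O {L} (lt : L -> L -> Prop) {P} (le : P -> P -> Prop) i g z :
  Cv lt le i g z -> O_conv lt le i g z.
Proof.
  destruct i; simpl; auto. intros (M & N & _ & _ & H). exists M, N; auto.
Qed.

Lemma O_C {L} (lt : L -> L -> Prop) {P} (le : P -> P -> Prop) i g z :
  is_poset le -> O_conv lt le i g z -> Cv lt le i g z \/ Dg le i z.
Proof.
  intros (Rf & As & Trp).
  destruct i; simpl; auto. intros (M & N & [HMu HMl] & [HNu HNl] & H).
  destruct (classic (exists m, M m)) as [HM|HM].
  - destruct (classic (exists n, N n)) as [HN|HN].
    + left. exists M, N. split; [auto|]. split; [auto|]. split; [split; auto|]. split; [split; auto|]. auto.
    + right. left. intros q. apply HNl. intros n Hn. exfalso; eauto.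
  - right. right. intros q. apply HMl. intros m Hm. exfalso; eauto.
Qed.

Lemma Dg_conv {L} (lt : L -> L -> Prop) {P} (le : P -> P -> Prop) i g z :
  is_poset le -> Dg le i z -> O_conv lt le i g z.
Proof.
  intros (Rf & As & Trp).
  destruct i; simpl; try tauto. intros [Ht|Hb].
  - exists (fun p => p = z), (fun _ => False). split; [|split].
    + split. intros m ->; auto. intros u Hu; apply Hu; auto.
    + split. intros n []. intros l _; apply Ht.
    + intros m n _ [].
  - exists (fun _ => False), (fun p => p = z). split; [|split].
    + split. intros n []. intros l _; apply Hb.
    + split. intros m ->; auto. intros u Hu; apply Hu; auto.
    + intros m n [].
Qed.

Lemma C_O3n {L} (lt : L -> L -> Prop) {P} (le : P -> P -> Prop) i g z :
  regular_cardinal L lt -> is_poset le -> Cv lt le i g z -> O3n lt le g z.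
Proof.
  intros RC (Rf & As & Trp). pose proof RC as (WF & Irr & Tr & To & [a0 _] & _).
  destruct i; simpl; auto.
  - intros (y & w & Hev & Hy & Hsy & Hw & Hiw).
    exists (range y), (range w). split; [exists (y a0); exists a0; auto|].
    split; [exists (w a0); exists a0; auto|]. split; auto. split; auto.
    intros m n [a <-] [b <-]. destruct Hev as [c Hc].
    destruct (leq_max lt To a b) as [d1 [H1 H2]].
    destruct (leq_max lt To d1 c) as [d [H3 H4]].
    exists d. intros e He. destruct (Hc e) as [Hc1 Hc2]. eapply (leq_trans lt Tr); eauto.
    split.
    + eapply Trp; [|apply Hc1]. apply Hy. eapply (leq_trans lt Tr); eauto. eapply (leq_trans lt Tr); eauto.
    + eapply Trp; [apply Hc2|]. apply Hw. eapply (leq_trans lt Tr); eauto. eapply (leq_trans lt Tr); eauto.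
  - intros (M & N & [HM _] & [HN _] & H). exists M, N; auto.
Qed.

Lemma O3n_unique {L} (lt : L -> L -> Prop) {P} (le : P -> P -> Prop) g z z' :
  regular_cardinal L lt -> is_poset le -> O3n lt le g z -> O3n lt le g z' -> z = z'.
Proof.
  intros RC (Rf & As & Trp). pose proof RC as (WF & Irr & Tr & To & [a0 _] & _).
  assert (K : forall z z', O3n lt le g z -> O3n lt le g z' -> le z z').
  { clear -Rf As Trp Tr To. intros z z' (M & N & _ & [n0 Hn0] & [HMu HMl] & [HNl HNu] & H)
      (M' & N' & [m0 Hm0] & _ & [HMu' HMl'] & [HNl' HNu'] & H').
    apply HMl. intros m Hm. apply HNu'. intros n Hn.
    destruct (ev_and lt _ _ Tr To (H m n0 Hm Hn0) (H' m0 n Hm0 Hn)) as [a Ha].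
    destruct (Ha a (leq_refl lt a)) as [[A1 _] [_ A2]]. eauto. }
  intros H1 H2. apply As; auto.
Qed.

Lemma O3n_freq {L} (lt : L -> L -> Prop) {P} (le : P -> P -> Prop) g z c :
  regular_cardinal L lt -> is_poset le -> O3n lt le g z ->
  (forall a, exists b, leq_of lt a b /\ g b = c) -> z = c.
Proof.
  intros RC (Rf & As & Trp). pose proof RC as (WF & Irr & Tr & To & [a0 _] & _).
  intros (M & N & [m0 Hm0] & [n0 Hn0] & [HMu HMl] & [HNl HNu] & H) Hc.
  assert (K : forall m n, M m -> N n -> le m c /\ le c n).
  { intros m n Hm Hn. destruct (H m n Hm Hn) as [a Ha]. destruct (Hc a) as [b [Hb <-]]. auto. }
  apply As.
  - apply HMl. intros m Hm. apply (K m n0); auto.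
  - apply HNu. intros n Hn. apply (K m0 n); auto.
Qed.

Lemma C_const {L} (lt : L -> L -> Prop) {P} (le : P -> P -> Prop) i c :
  regular_cardinal L lt -> is_poset le -> Cv lt le i (fun _ => c) c.
Proof.
  intros RC (Rf & As & Trp). pose proof RC as (WF & Irr & Tr & To & [a0 _] & _).
  assert (Hs : is_sup le (fun p => p = c) c).
  { split. intros m ->; auto. intros u Hu; apply Hu; auto. }
  assert (Hi : is_inf le (fun p => p = c) c).
  { split. intros m ->; auto. intros u Hu; apply Hu; auto. }
  destruct i; simpl.
  - exists (fun _ => c), (fun _ => c). split; [exists a0; auto|].
    split; [intros a b _; auto|]. split.
    + split. intros m [a <-]; auto. intros u Hu; apply (Hu c); exists a0; auto.
    + split; [intros a b _; auto|]. split. intros m [a <-]; auto. intros u Hu; apply (Hu c); exists a0; auto.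
  - exists (fun p => p = c), (fun p => p = c). split; [split; [eauto|intros a b -> ->; eauto]|].
    split; [split; [eauto|intros a b -> ->; eauto]|]. split; auto. split; auto.
    intros m n -> ->. exists a0; auto.
  - exists (fun p => p = c), (fun p => p = c). split; eauto. split; eauto. split; auto. split; auto.
    intros m n -> ->. exists a0; auto.
Qed.

Lemma ev_sub {L} (lt : L -> L -> Prop) (Q : L -> Prop) k :
  (forall a b c, lt a b -> lt b c -> lt a c) ->
  isotone lt k -> cofinal lt k -> eventually lt Q -> eventually lt (fun g => Q (k g)).
Proof.
  intros Tr Hi Hc [a Ha]. destruct (Hc a) as [b Hb]. exists b. intros g Hg.
  apply Ha. eapply (leq_trans lt Tr); eauto.
Qed.

Lemma C_sub {L} (lt : L -> L -> Prop) {P} (le : P -> P -> Prop) i g z k :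
  regular_cardinal L lt -> is_poset le -> isotone lt k -> cofinal lt k ->
  Cv lt le i g z -> Cv lt le i (fun a => g (k a)) z.
Proof.
  intros RC (Rf & As & Trp) Hki Hkc. pose proof RC as (WF & Irr & Tr & To & [a0 _] & _).
  destruct i; simpl.
  - intros (y & w & Hev & Hy & [Hsy1 Hsy2] & Hw & [Hiw1 Hiw2]).
    exists (fun a => y (k a)), (fun a => w (k a)). split; [exact (ev_sub lt (fun g0 => le (y g0) (g g0) /\ le (g g0) (w g0)) k Tr Hki Hkc Hev)|].
    split; [intros a b Hab; apply Hy; auto|]. split; [split|].
    + intros m [a <-]. apply Hsy1. exists (k a); auto.
    + intros u Hu. apply Hsy2. intros m [a <-]. destruct (Hkc a) as [b Hb].
      eapply Trp; [apply Hy; eauto|]. apply Hu. exists b; auto.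
    + split; [intros a b Hab; apply Hw; auto|]. split.
      * intros m [a <-]. apply Hiw1. exists (k a); auto.
      * intros u Hu. apply Hiw2. intros m [a <-]. destruct (Hkc a) as [b Hb].
        eapply Trp; [|apply Hw; eauto]. apply Hu. exists b; auto.
  - intros (M & N & H1 & H2 & H3 & H4 & H). exists M, N. do 4 (split; [assumption|]).
    intros m n Hm Hn. exact (ev_sub lt (fun g0 => le m (g g0) /\ le (g g0) n) k Tr Hki Hkc (H m n Hm Hn)).
  - intros (M & N & H1 & H2 & H3 & H4 & H). exists M, N. do 4 (split; [assumption|]).
    intros m n Hm Hn. exact (ev_sub lt (fun g0 => le m (g g0) /\ le (g g0) n) k Tr Hki Hkc (H m n Hm Hn)).
Qed.

Lemma C_ev {L} (lt : L -> L -> Prop) {P} (le : P -> P -> Prop) i g g' z :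
  regular_cardinal L lt -> eventually lt (fun a => g a = g' a) ->
  Cv lt le i g z -> Cv lt le i g' z.
Proof.
  intros RC He. pose proof RC as (WF & Irr & Tr & To & [a0 _] & _).
  destruct i; simpl.
  - intros (y & w & Hev & R). exists y, w. split; auto.
    destruct (ev_and lt _ _ Tr To He Hev) as [a Ha]. exists a. intros b Hb.
    destruct (Ha b Hb) as [<- H]. auto.
  - intros (M & N & H1 & H2 & H3 & H4 & H). exists M, N. do 4 (split; [assumption|]).
    intros m n Hm Hn. destruct (ev_and lt _ _ Tr To He (H m n Hm Hn)) as [a Ha]. exists a. intros b Hb.
    destruct (Ha b Hb) as [<- H']. auto.
  - intros (M & N & H1 & H2 & H3 & H4 & H). exists M, N. do 4 (split; [assumption|]).
    intros m n Hm Hn. destruct (ev_and lt _ _ Tr To He (H m n Hm Hn)) as [a Ha]. exists a. intros b Hb.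
    destruct (Ha b Hb) as [<- H']. auto.
Qed.

Lemma freq_split {L} (lt : L -> L -> Prop) (Q : L -> Prop) :
  (forall a, exists b, leq_of lt a b /\ Q b) \/ eventually lt (fun b => ~ Q b).
Proof.
  destruct (classic (forall a, exists b, leq_of lt a b /\ Q b)); auto.
  right. apply not_cofinal_ev; auto.
Qed.

Lemma closedY {L} (lt : L -> L -> Prop) {P} (le : P -> P -> Prop) i (F : L -> P) a0 (Q : Prop) y :
  regular_cardinal L lt -> is_poset le ->
  (forall h p, isotone lt h -> cofinal lt h -> Cv lt le i (fun a => F (h a)) p -> Q /\ p = y) ->
  O_closed lt le i (fun p => Dg le i p \/ (Q /\ p = y) \/ exists a, leq_of lt a0 a /\ F a = p).
Proof.
  intros RC PO HK g z Hg Hc. pose proof PO as (Rf & As & Trp).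
  pose proof RC as (WF & Irr & Tr & To & _).
  destruct (O_C lt le i g z PO Hc) as [Hc'|HD]; [|left; auto].
  pose proof (C_O3n lt le i g z RC PO Hc') as H3.
  destruct (freq_split lt (fun b => Dg le i (g b))) as [HDf|HDe].
  { destruct i; [destruct (HDf a0) as [? [? []]] | destruct (HDf a0) as [? [? []]] |]. simpl in HDf.
    left. simpl.
    destruct (freq_split lt (fun b => istop le (g b))) as [Ht|Hte].
    - destruct (Ht a0) as [b0 [_ Hb0]].
      left. rewrite (O3n_freq lt le g z (g b0) RC PO H3); auto.
      intros a. destruct (Ht a) as [b [Hb Hb']]. exists b. split; auto.
    - destruct Hte as [c Hc2]. destruct (HDf c) as [b0 [Hb0 [Hb1|Hb1]]]; [exfalso; eapply Hc2; eauto|].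
      right. rewrite (O3n_freq lt le g z (g b0) RC PO H3); auto.
      intros a. destruct (leq_max lt To a c) as [d [Hd1 Hd2]].
      destruct (HDf d) as [b [Hb [Hb'|Hb']]].
      + exfalso. eapply Hc2; [|exact Hb']. eapply (leq_trans lt Tr); eauto.
      + exists b. split; [eapply (leq_trans lt Tr); eauto|]. apply As; auto. }
  destruct (freq_split lt (fun b => Q /\ g b = y)) as [HQf|HQe].
  { destruct (HQf a0) as [b0 [_ [HQ _]]]. right; left. split; auto.
    apply (O3n_freq lt le g z y RC PO H3). intros a. destruct (HQf a) as [b [Hb [_ Hb']]]. eauto. }
  assert (HE : eventually lt (fun b => exists a, leq_of lt a0 a /\ F a = g b)).
  { destruct (ev_and lt _ _ Tr To HDe HQe) as [c Hc2]. exists c. intros b Hb.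
    destruct (Hc2 b Hb) as [H1 H2]. destruct (Hg b) as [H|[H|H]]; tauto. }
  destruct (classic (exists al, forall a, exists b, leq_of lt a b /\
      exists c, lt c al /\ (leq_of lt a0 c /\ F c = g b))) as [[al Hal]|Hnal].
  { destruct (pigeon lt RC al _ Hal) as [c [Hc1 Hc2]].
    destruct (Hc2 a0) as [b0 [_ [Hb0 _]]]. right; right. exists c. split; auto. symmetry.
    apply (O3n_freq lt le g z (F c) RC PO H3). intros a. destruct (Hc2 a) as [b [Hb [_ Hb']]]. eauto. }
  set (A := fun b => epsilon (inhabits a0) (fun a => leq_of lt a0 a /\ F a = g b)).
  assert (HA : eventually lt (fun b => leq_of lt a0 (A b) /\ F (A b) = g b)).
  { destruct HE as [c Hc2]. exists c. intros b Hb. apply (epsilon_spec (inhabits a0) _ (Hc2 b Hb)). }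
  assert (HAi : forall al, eventually lt (fun b => leq_of lt al (A b))).
  { intros al. assert (Hn := Hnal). apply not_ex_all_not with (n := al) in Hn.
    apply not_cofinal_ev in Hn.
    destruct (ev_and lt _ _ Tr To HA Hn) as [c Hc2]. exists c. intros b Hb.
    destruct (Hc2 b Hb) as [[H1 H2] H3']. apply (not_lt_leq lt To). intros Hlt.
    apply H3'. exists (A b). auto. }
  destruct (extract lt RC A HAi) as [k (Hki & Hkc & HAki & HAkc)].
  assert (Hgk := C_sub lt le i g z k RC PO Hki Hkc Hc').
  assert (HFk : Cv lt le i (fun a => F (A (k a))) z).
  { apply (C_ev lt le i (fun a => g (k a))); auto.
    destruct (ev_sub lt _ k Tr Hki Hkc HA) as [c Hc2]. exists c. intros b Hb.
    symmetry; apply Hc2; auto. }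
  destruct (HK _ z HAki HAkc HFk) as [HQ ->]. right; left. auto.
Qed.

Lemma tau_sub {L} (lt : L -> L -> Prop) {P} (le : P -> P -> Prop) i f x h :
  regular_cardinal L lt -> tau_conv lt le i f x -> isotone lt h -> cofinal lt h ->
  tau_conv lt le i (fun a => f (h a)) x.
Proof.
  intros RC Ht Hi Hc U HU Ux. pose proof RC as (WF & Irr & Tr & To & _).
  exact (ev_sub lt (fun a => U (f a)) h Tr Hi Hc (Ht U HU Ux)).
Qed.

Lemma contra {L} (lt : L -> L -> Prop) {P} (le : P -> P -> Prop) i (F : L -> P) x (Q : Prop) y a0 :
  regular_cardinal L lt -> is_poset le -> tau_conv lt le i F x -> ~ Dg le i x ->
  (forall a, leq_of lt a0 a -> F a <> x) -> ~ (Q /\ x = y) ->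
  (forall h p, isotone lt h -> cofinal lt h -> Cv lt le i (fun a => F (h a)) p -> Q /\ p = y) ->
  False.
Proof.
  intros RC PO Ht HnD Ha0 HnQ HK. pose proof RC as (WF & Irr & Tr & To & _).
  pose proof (closedY lt le i F a0 Q y RC PO HK) as Hcl.
  set (Y := fun p => Dg le i p \/ (Q /\ p = y) \/ exists a, leq_of lt a0 a /\ F a = p) in *.
  assert (Ho : O_open lt le i (fun p => ~ Y p)).
  { intros g z Hg Hc Hz. apply Hz. apply (Hcl g z); auto. intros a; apply NNPP; auto. }
  assert (Ux : ~ Y x).
  { intros [H|[H|[a [H1 H2]]]]; auto. apply (Ha0 a); auto. }
  destruct (Ht _ Ho Ux) as [c Hc].
  destruct (leq_max lt To c a0) as [d [H1 H2]].
  apply (Hc d H1). right; right. exists d; auto.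
Qed.

Theorem mainTheorem3 (L : Type) (lt : L -> L -> Prop) (P : Type) (le : P -> P -> Prop)
  (i : Oidx) (f : L -> P) (x : P) :
  regular_cardinal L lt -> is_poset le -> tau_conv lt le i f x ->
  exists h : L -> L, isotone lt h /\ cofinal lt h /\
    O_conv lt le i (fun a => f (h a)) x.
Proof.
  intros RC PO Ht. pose proof RC as (WF & Irr & Tr & To & [a00 _] & _).
  destruct (classic (Dg le i x)) as [HD|HnD].
  { exists (fun a => a). split; [intros a b H; auto|]. split; [intros a; exists a; right; auto|].
    apply Dg_conv; auto. }
  destruct (classic (exists h y, isotone lt h /\ cofinal lt h /\ Cv lt le i (fun a => f (h a)) y))
    as [[h [y [Hi [Hc Hy]]]]|Hno].
  - exists h. split; auto. split; auto.
    enough (y = x) by (subst; apply C_O; auto).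
    apply NNPP; intro Hyx.
    destruct (freq_split lt (fun a => f (h a) = x)) as [Hf|[a0 Ha0]].
    { apply Hyx. apply (O3n_freq lt le _ y x RC PO (C_O3n lt le i _ _ RC PO Hy)); auto. }
    apply (contra lt le i (fun a => f (h a)) x True y a0 RC PO (tau_sub lt le i f x h RC Ht Hi Hc)
             HnD Ha0).
    + intros [_ e]. auto.
    + intros h' p Hi' Hc' Hp. split; auto.
      apply (O3n_unique lt le _ _ _ RC PO (C_O3n lt le i _ _ RC PO Hp)).
      apply (C_O3n lt le i _ _ RC PO). apply (C_sub lt le i (fun a => f (h a)) y h' RC PO Hi' Hc' Hy).
  - exfalso.
    destruct (freq_split lt (fun a => f a = x)) as [Hf|[a0 Ha0]].
    + set (A := fun b => epsilon (inhabits a00) (fun a => leq_of lt b a /\ f a = x)).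
      assert (HA : forall b, leq_of lt b (A b) /\ f (A b) = x).
      { intros b. apply (epsilon_spec (inhabits a00) (fun a => leq_of lt b a /\ f a = x)). apply Hf. }
      assert (HAi : forall al, eventually lt (fun b => leq_of lt al (A b))).
      { intros al. exists al. intros b Hb. eapply (leq_trans lt Tr); eauto. apply HA. }
      destruct (extract lt RC A HAi) as [k (Hki & Hkc & HAki & HAkc)].
      apply Hno. exists (fun a => A (k a)), x. split; auto. split; auto.
      apply (C_ev lt le i (fun _ => x)); [auto| |apply C_const; auto].
      exists a00. intros b _. symmetry; apply HA.
    + apply (contra lt le i f x False x a0 RC PO Ht HnD Ha0); [tauto|].
      intros h p Hi Hc Hp. exfalso. apply Hno. eauto.
Qed.
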